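(* Let $G$ be a vigorous subgroup of $\operatorname{Homeo}(\mathfrak{C})$ and let $U\in K_{\mathfrak{C}}$. Then the set $$X_{G,U}:=\{\gamma\in G: \text{there is a proper clopen subset } V \text{ of } U \text{ with } \operatorname{supp}(\gamma)\subseteq V\}$$ generates $\operatorname{pstab}_G(\mathfrak{C}\setminus U)$.
   Context: $\mathfrak{C}$ denotes a Cantor space (a space homeomorphic to $\{0,1\}^\omega$). Groups of homeomorphisms act on the right, and products are composed left to right. $K_{\mathfrak{C}}$ denotes the set of non-empty proper clopen subsets of $\mathfrak{C}$. For $\gamma\in\operatorname{Homeo}(\mathfrak{C})$, $\operatorname{supp}(\gamma)=\{p\in\mathfrak{C}: p\gamma\neq p\}$. For $G\le\operatorname{Homeo}(\mathfrak{C})$ and $A\subseteq\mathfrak{C}$, $\operatorname{pstab}_G(A)=\{g\in G: pg=p \text{ for all } p\in A\}$. A subset $S\subseteq \operatorname{Homeo}(\mathfrak{C})$ is vigorous if for all clopen $A,B,C\subseteq\mathfrak{C}$ with $B,C$ non-empty proper subsets of $A$ there is $\gamma\in S$ with $\operatorname{supp}(\gamma)\subseteq A$ and $B\gamma\subseteq C$. *)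

(* Defs.v *)
From HB Require Import structures.
From mathcomp Require Import all_boot all_order all_algebra.
From mathcomp Require Import all_classical all_reals topology cantor.
Set Implicit Arguments. Unset Strict Implicit. Unset Printing Implicit Defensive.
Local Open Scope classical_set_scope.

Notation CS := cantor_space.

Definition is_homeo_pair (f g : CS -> CS) : Prop :=
  continuous f /\ continuous g /\ cancel f g /\ cancel g f.

Definition is_homeo (f : CS -> CS) : Prop := exists g, is_homeo_pair f g.

Definition homeo_subgroup (G : set (CS -> CS)) : Prop :=
  [/\ (forall f, G f -> is_homeo f),
      G id,
      (forall f g, G f -> G g -> G (g \o f))
    & (forall f, G f -> exists2 g, G g & is_homeo_pair f g)].

(* support: points moved by f (no closure, as in the paper) *)
Definition supp (f : CS -> CS) : set CS := [set p | f p <> p].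

Definition pstab (G : set (CS -> CS)) (A : set CS) : set (CS -> CS) :=
  [set g | G g /\ forall p, A p -> g p = p].

Definition proper_subset (B A : set CS) : Prop := B `<=` A /\ B <> A.

Definition vigorous (S : set (CS -> CS)) : Prop :=
  forall A B C : set CS, clopen A -> clopen B -> clopen C ->
    B <> set0 -> C <> set0 -> proper_subset B A -> proper_subset C A ->
    exists2 g, S g & supp g `<=` A /\ g @` B `<=` C.

Inductive gen (X : set (CS -> CS)) : (CS -> CS) -> Prop :=
| gen_id : gen X id
| gen_mul : forall x g, X x -> gen X g -> gen X (x \o g)
| gen_inv : forall x x' g, X x -> is_homeo_pair x x' -> gen X g -> gen X (x' \o g).

Definition XGU (G : set (CS -> CS)) (U : set CS) : set (CS -> CS) :=
  [set g | G g /\ exists V : set CS, clopen V /\ proper_subset V U /\ supp g `<=` V].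

(* Main.v *)
Require Import Defs.
From mathcomp Require Import all_boot all_order all_algebra.
From mathcomp Require Import all_classical all_reals topology cantor.
Local Open Scope classical_set_scope.

Lemma avoid_pt (U : set CS) (p : CS) : clopen U -> U p ->
  exists R : set CS, [/\ clopen R, R `<=` U, ~ R p & exists r, R r].
Proof.
move=> cU Up.
have [x [y [Ux Uy xy]]] := (perfectTP_ex.1 cantor_perfect) U cU.1 (ex_intro _ p Up).
have [w [Uw wp]] : exists w, U w /\ w != p.
  have [xp|xp] := eqVneq x p; last by exists x.
  by exists y; split => //; rewrite -xp eq_sym.
have [W [cW Ww nWp]] := cantor_zero_dimensional wp.
exists (U `&` W); split.
- exact: clopenI.
- by move=> z [].
- by move=> [_ /nWp].
- by exists w.
Qed.

Theorem lemma2p7 (G : set (CS -> CS)) (U : set CS) :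
  homeo_subgroup G -> vigorous G ->
  clopen U -> U <> set0 -> U <> setT ->
  gen (XGU G U) = pstab G (~` U).
Proof.
move=> [Ghom Gid Gcomp Ginv] vig cU U0 UT.
have invG : forall f f', G f -> is_homeo_pair f f' -> G f'.
  move=> f f' Gf [_ [_ [fK f'K]]].
  have [f'' Gf'' [_ [_ [fK' f''K]]]] := Ginv f Gf.
  have -> : f' = f'' by apply: funext => y; rewrite -{1}(f''K y) fK.
  exact: Gf''.
apply/seteqP; split.
  move=> f; elim => [|x g [Gx [V [cV [[VU _] sV]]]] _ [Gg gfix]
                     |x x' g [Gx [V [cV [[VU _] sV]]]] hx _ [Gg gfix]].
  - by split => //.
  - split; first exact: Gcomp.
    move=> z nUz /=; rewrite gfix //.
    apply: contrapT => h; exact: nUz (VU _ (sV _ h)).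
  - split; first by apply: (Gcomp) => //; exact: invG hx.
    move: hx => [_ [_ [xK x'K]]].
    move=> z nUz /=; rewrite gfix //.
    have xz : x z = z.
      apply: contrapT => h; exact: nUz (VU _ (sV _ h)).
    by rewrite -{1}xz xK.
move=> g [Gg gfix].
have [g' Gg' [cg [cg' [gK g'K]]]] := Ginv g Gg.
have gU : forall x, U x -> U (g x).
  move=> x Ux; apply: contrapT => nU.
  have := gfix _ nU; move/(can_inj gK) => e; by apply: nU; rewrite e.
have /set0P [p Up] : U != set0 by apply/eqP.
have [z nUz] : exists z, ~ U z.
  apply: contrapT => h; apply: UT; apply/seteqP; split => // x _.
  apply: contrapT => nx; apply: h; by exists x.
set q := g p.
have Uq : U q by exact: gU.
have [R [cR RU nRp nRq [r Rr]]] : exists R : set CS,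
    [/\ clopen R, R `<=` U, ~ R p, ~ R q & exists r, R r].
  have [R1 [cR1 R1U nR1p [r1 R1r1]]] := avoid_pt _ _ cU Up.
  have [R1q|R1nq] := pselect (R1 q); last by exists R1; split => //; exists r1.
  have [R2 [cR2 R2R1 nR2q [r2 R2r2]]] := avoid_pt _ _ cR1 R1q.
  exists R2; split => //; first by move=> y /R2R1 /R1U.
  - by move=> /R2R1.
  - by exists r2.
have [T [cT TR nTr [t Tt]]] := avoid_pt _ _ cR Rr.
set Y := U `&` ~` R.
have cY : clopen Y by apply: clopenI => //; exact: clopenC.
set S := Y `&` (g @^-1` Y).
have cS : clopen S by apply: clopenI => //; exact: preimage_clopen.
set S' := g' @^-1` S.
have cS' : clopen S' by exact: preimage_clopen.
have SY : S `<=` Y by move=> y [].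
have S'Y : S' `<=` Y by move=> y [_ /=]; rewrite g'K.
set A := ~` (S `|` S').
set B := U `&` A.
have cA : clopen A by exact: (clopenC set0 (clopenU cS cS')).
have cB : clopen B by exact: clopenI.
have YnR : forall y, Y y -> ~ R y by move=> y [].
have Ar : A r by move=> [/SY /YnR | /S'Y /YnR].
have Az : A z by move=> [/SY [] | /S'Y []].
have AT : T `<=` A by move=> y /TR Ry [/SY /YnR | /S'Y /YnR].
have [k Gk [suppk kBT]] : exists2 k, G k & supp k `<=` A /\ k @` B `<=` T.
  apply: vig => //.
  - move=> e; have Br : B r by split; [exact: RU | exact: Ar].
    by rewrite e in Br.
  - by move=> e; rewrite e in Tt.
  - split; first by move=> y [].
    move=> e; have Bz : B z by rewrite e.
    by case: Bz.
  - split => //.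
    move=> e; have Tz : T z by rewrite e.
    by apply: nUz; apply: RU; apply: TR.
have [k' Gk' [ck [ck' [kK k'K]]]] := Ginv k Gk.
have kfix : forall x, ~ A x -> k x = x.
  move=> x nAx; apply: contrapT => h; exact: nAx (suppk _ h).
have kB : forall y, B y -> T (k y).
  by move=> y By; apply: kBT; exists y.
set b := k \o (g \o k').
have Gb : G b by apply: (Gcomp) => //; exact: Gcomp.
set V := Y `|` T.
have cV : clopen V by exact: clopenU.
have VU : V `<=` U by move=> y [[]|/TR/RU].
have suppb : supp b `<=` V.
  move=> x bx.
  have ex : x = k (k' x) by rewrite k'K.
  have [Uy|nUy] := pselect (U (k' x)).
    have [Ay|nAy] := pselect (A (k' x)).
      by right; rewrite ex; apply: (kB).
    have SS : (S `|` S') (k' x) by apply: contrapT.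
    left; rewrite ex kfix //.
    by case: SS => [/SY|/S'Y].
  exfalso; apply: bx; rewrite /b /= gfix //.
have [b' Gb' [cb [cb' [bK b'K]]]] := Ginv b Gb.
set a := b' \o g.
have Ga : G a by exact: Gcomp.
have Sp : S p.
  split; split => //.
have XGUb : XGU G U b.
  split => //; exists V; split => //; split => //; split => //.
  move=> e; have Ur : U r by exact: RU.
  rewrite -e in Ur.
  case: Ur => [[_]|/nTr] //.
have XGUa : XGU G U a.
  split => //; exists (U `&` ~` S); split.
    by apply: clopenI => //; exact: (clopenC set0).
  split; last first.
    move=> x ax.
    have bfix : forall y, ~ U y -> b y = y.
      move=> y nUy; apply: contrapT => h; exact: nUy (VU _ (suppb _ h)).
    have [Ux|nUx] := pselect (U x); last first.
      exfalso; apply: ax; rewrite /a /= gfix // -{1}(bfix _ nUx) bK //.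
    split => // Sx.
    have nAx : ~ A x by apply; left.
    have kx : k' x = x by rewrite -{1}(kfix _ nAx) kK.
    have S'gx : S' (g x) by rewrite /S' /= gK.
    have nAgx : ~ A (g x) by apply; right.
    have bgx : b x = g x by rewrite /b /= kx kfix.
    by apply: ax; rewrite /a /= -bgx bK.
  split; first by move=> y [].
  move=> e; have Up' : U p by [].
  rewrite -e in Up'.
  by case: Up'.
have -> : g = b \o (a \o id).
  by apply: funext => x; rewrite /a /= b'K.
apply: gen_mul => //.
exact: gen_mul (gen_id _).
Qed.
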